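(* Let $T$ be a tree on $n$ vertices whose characteristic polynomial is irreducible over $\mathbb{Q}$, and order the vertices according to the bipartition so that $A(T)=\begin{bmatrix} O & M\\ M^{\mathrm T} & O\end{bmatrix}$. Then $\Delta(T)=2^n\Delta^2(M^{\mathrm T}M)$.
   Context: For a monic polynomial $f$ of degree $k$ with roots $\alpha_1,\dots,\alpha_k$, the discriminant is $\Delta(f)=\prod_{1\le i<j\le k}(\alpha_i-\alpha_j)^2$. For a square matrix $B$, $\Delta(B)$ is the discriminant of $\det(xI-B)$; $\Delta(T)$ is the discriminant of the adjacency matrix $A(T)$. *)

(* Defs.v *)
From HB Require Import structures.
From mathcomp Require Import all_boot all_order all_algebra all_field.
Set Implicit Arguments. Unset Strict Implicit. Unset Printing Implicit Defensive.
Import Order.TTheory GRing.Theory Num.Theory.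
Local Open Scope ring_scope.

Definition simple_graph n (T : rel 'I_n) : Prop :=
  symmetric T /\ irreflexive T.

Definition graph_connected n (T : rel 'I_n) : Prop :=
  forall x y : 'I_n, connect T x y.

Definition graph_acyclic n (T : rel 'I_n) : Prop :=
  forall c : seq 'I_n, uniq c -> (2 < size c)%N -> ~~ cycle T c.

Definition is_tree n (T : rel 'I_n) : Prop :=
  [/\ simple_graph T, graph_connected T & graph_acyclic T].

Definition adjmx (R : nzRingType) n (T : rel 'I_n) : 'M[R]_n :=
  \matrix_(i, j) (T i j)%:R.

Definition roots_of (p : {poly algC}) : seq algC :=
  sval (closed_field_poly_normal p).

Definition disc (p : {poly algC}) : algC :=
  let r := roots_of p in
  \prod_(i < size r) \prod_(j < size r | (i < j)%N) (r`_i - r`_j) ^+ 2.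

Definition disc_mx k (B : 'M[algC]_k) : algC := disc (char_poly B).

Definition disc_graph n (T : rel 'I_n) : algC := disc_mx (adjmx algC T).

(* Main.v *)
Require Import Defs.
From HB Require Import structures.
From mathcomp Require Import all_boot all_order all_algebra all_field.
From mathcomp Require Import ring fingroup perm zify.
Import Order.TTheory GRing.Theory Num.Theory.
Local Open Scope ring_scope.

Definition Dseq (r : seq algC) : algC :=
  \prod_(i < size r) \prod_(j < size r | (i < j)%N) (r`_i - r`_j) ^+ 2.
Definition PX (r : seq algC) : {poly algC} := \prod_(x <- r) ('X - x%:P).
Definition Pf (f : {poly algC}) (r : seq algC) : algC := \prod_(x <- r) f^`().[x].

Lemma Dseq_cons a r : Dseq (a :: r) = (\prod_(x <- r) (a - x) ^+ 2) * Dseq r.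
Proof.
rewrite /Dseq /= big_ord_recl; congr (_ * _).
  rewrite big_mkcond big_ord_recl /= mul1r.
  by rewrite [RHS](big_nth 0) big_mkord; apply: eq_bigr => j _ /=; rewrite add0n.
apply: eq_bigr => i _.
rewrite big_mkcond big_ord_recl /= mul1r [RHS]big_mkcond; apply: eq_bigr => j _ /=.
by rewrite /bump /= !add1n ltnS.
Qed.

Lemma big_cons_id (F : algC -> algC) a r : \prod_(x <- a :: r) F x = F a * \prod_(x <- r) F x.
Proof. by rewrite big_cons. Qed.

Lemma Pf_cons a r : Pf (PX (a :: r)) (a :: r) =
   (-1) ^+ size r * (\prod_(x <- r) (a - x) ^+ 2) * Pf (PX r) r.
Proof.
have -> : PX (a :: r) = ('X - a%:P) * PX r by rewrite /PX big_cons.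
rewrite /Pf.
rewrite big_cons_id. rewrite derivM derivXsubC mul1r.
rewrite hornerD hornerM hornerXsubC subrr mul0r addr0.
have -> : \prod_(x <- r) (PX r + ('X - a%:P) * (PX r)^`()).[x]
    = \prod_(x <- r) ((x - a) * (PX r)^`().[x]).
  rewrite big_seq_cond [RHS]big_seq_cond; apply: eq_bigr => x /andP[xr _].
  rewrite hornerD hornerM hornerXsubC.
  have /rootP -> : root (PX r) x by rewrite root_prod_XsubC.
  by rewrite add0r.
rewrite big_split /= /PX horner_prod.
under [\prod_(x <- r) (x - a)]eq_bigr => x _ do rewrite -opprB -mulN1r.
rewrite big_split /= big_const_seq count_predT iter_mulr_1.
under eq_bigr => x _ do rewrite hornerXsubC.
rewrite prodrXl; set u := \prod_(x <- r) (a - x); set v := \prod_(i <- r) _.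
by rewrite expr2; ring.
Qed.

Lemma Pf_Dseq r : Pf (PX r) r = (-1) ^+ 'C(size r, 2) * Dseq r.
Proof.
elim: r => [|a r IH]; first by rewrite /Pf /Dseq !big_nil big_ord0 mulr1.
rewrite Pf_cons IH Dseq_cons /= binS bin1 exprD.
ring.
Qed.

Lemma disc_PX r : disc (PX r) = (-1) ^+ 'C(size r, 2) * Pf (PX r) r.
Proof.
rewrite /disc /roots_of; case: closed_field_poly_normal => r0 /= H.
have mon : PX r \is monic by rewrite monic_prod_XsubC.
rewrite (monicP mon) scale1r in H.
have pe : perm_eq r0 r by apply: prod_XsubC_eq; rewrite -H.
have -> : Pf (PX r) r = Pf (PX r0) r0.
  have H0 : PX r0 = PX r by rewrite H.
  by rewrite /Pf H0 (perm_big _ pe).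
by rewrite (Pf_Dseq r0) -(perm_size pe) mulrA -exprD -signr_odd oddD addbb expr0 mul1r.

Qed.
Lemma sign_bin2_double m : (-1) ^+ 'C(m + m, 2) = (-1) ^+ m :> algC.
Proof.
rewrite -signr_odd -[RHS]signr_odd; congr (_ ^+ _).
rewrite bin2 addnn -doubleMl half_double oddM.
case: m => [|m] //; rewrite doubleS /= odd_double /=.
by rewrite andbT.
Qed.

Lemma comp_X2_PX r : PX r \Po 'X^2 =
  PX (map sqrtC r ++ map (fun x => - sqrtC x) r).
Proof.
rewrite /PX big_cat !big_map /=.
transitivity (\prod_(x <- r) (('X - (sqrtC x)%:P) * ('X - (- sqrtC x)%:P))); last first.
  by rewrite big_split.
rewrite rmorph_prod; apply: eq_bigr => x _ /=.
rewrite comp_polyB comp_polyX comp_polyC -{1}(sqrtCK x) (rmorphXn polyC) subr_sqr.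
by rewrite polyCN opprK.
Qed.

Lemma disc_comp2 g : g \is monic ->
  disc (g \Po 'X^2) = 4 ^+ (size g).-1 * ((-1) ^+ (size g).-1 * g`_0) * disc g ^+ 2.
Proof.
move=> mg; have [rg Hg] := closed_field_poly_normal g.
rewrite (monicP mg) scale1r in Hg.
have Hg' : g = PX rg by [].
have sz : (size g).-1 = size rg by rewrite Hg' /PX size_prod_XsubC.
rewrite sz Hg' comp_X2_PX disc_PX size_cat !size_map sign_bin2_double disc_PX.
set r := (map _ _ ++ _).
have Hd : forall x, (PX r)^`().[x] = (PX rg)^`().[x ^+ 2] * (x *+ 2).
  move=> x; rewrite -comp_X2_PX deriv_comp derivXn hornerM horner_comp hornerXn.
  by rewrite hornerMn /= hornerX.
have E : Pf (PX r) r = \prod_(x <- rg) ((PX rg)^`().[x] ^+ 2 * (-4 * x)).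
  rewrite /Pf {1}/r big_cat !big_map /=.
  transitivity (\prod_(x <- rg) ((PX r)^`().[sqrtC x] * (PX r)^`().[- sqrtC x])).
    by rewrite big_split.
  apply: eq_bigr => x _; rewrite !Hd sqrrN sqrtCK.
  transitivity ((PX rg)^`().[x] ^+ 2 * (-4 * sqrtC x ^+ 2)); first by ring.
  by rewrite sqrtCK.
rewrite E big_split /= prodrXl.
have E0 : (PX rg)`_0 = (-1) ^+ size rg * \prod_(x <- rg) x.
  rewrite -horner_coef0 /PX horner_prod.
  under eq_bigr => x _ do rewrite hornerXsubC sub0r -mulN1r.
  by rewrite big_split /= big_const_seq count_predT iter_mulr_1.
have E4 : \prod_(x <- rg) (-4 * x) = (-1) ^+ size rg * 4 ^+ size rg * \prod_(x <- rg) x.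
  by rewrite big_split /= big_const_seq count_predT iter_mulr_1 -exprMn mulN1r.
rewrite E4 E0.
have s2 : forall k, ((-1) ^+ k) ^+ 2 = 1 :> algC.
  by move=> k; rewrite -exprM mulnC exprM sqrrN !expr1n.
have s3 : forall k, ((-1) ^+ k) * ((-1) ^+ k) = 1 :> algC.
  by move=> k; rewrite -expr2 s2.
set t := (-1) ^+ size rg; set P := Pf _ _; set Q := \prod_(x <- rg) x.
rewrite exprMn s2 mul1r.
rewrite -/(Pf (PX rg) rg) -/P.
ring.
Qed.

Lemma det_conj_perm (R : comNzRingType) n (s : 'S_n) (C : 'M[R]_n) :
  \det (\matrix_(i, j) C (s i) (s j)) = \det C.
Proof.
have -> : \matrix_(i, j) C (s i) (s j) = perm_mx s *m C *m perm_mx s^-1.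
  by rewrite -row_permE -col_permE; apply/matrixP => i j; rewrite !mxE.
by rewrite !det_mulmx !det_perm odd_permV mulrAC -expr2 sqrr_sign mul1r.
Qed.

Lemma char_poly_perm (R : comNzRingType) n (s : 'S_n) (A : 'M[R]_n) :
  char_poly (\matrix_(i, j) A (s i) (s j)) = char_poly A.
Proof.
rewrite /char_poly -(@det_conj_perm _ _ s (char_poly_mx A)); congr (\det _).
by apply/matrixP => i j; rewrite !mxE (inj_eq perm_inj).
Qed.

Lemma cpmx_block p q (M : 'M[algC]_(p, q)) :
  char_poly_mx (block_mx 0 M M^T 0) =
  block_mx 'X%:M (- map_mx polyC M) (- (map_mx polyC M)^T) 'X%:M.
Proof.
rewrite /char_poly_mx (scalar_mx_block p q) map_block_mx opp_block_mx add_block_mx.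
by rewrite !map_mx0 !oppr0 !addr0 !add0r map_trmx.
Qed.

Lemma cpmx_X2 k (N : 'M[algC]_k) :
  char_poly (N) \Po 'X^2 = \det (('X^2)%:M - map_mx polyC N).
Proof.
rewrite /char_poly /char_poly_mx -det_map_mx; congr (\det _).
by rewrite map_mxB map_scalar_mx /= comp_polyX; congr (_ - _);
  apply/matrixP => i j; rewrite !mxE comp_polyC.
Qed.

Lemma block_id1 p q (M : 'M[algC]_(p, q)) :
  char_poly (block_mx 0 M M^T 0) * 'X^(p + q) =
  ('X^2) ^+ p * (char_poly (M^T *m M) \Po 'X^2).
Proof.
set M' := map_mx polyC M.
have H : \det (block_mx ('X%:M : 'M_p) M' 0 ('X%:M : 'M_q)) = 'X^(p + q).
  by rewrite det_ublock !det_scalar exprD.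
rewrite -H /char_poly -det_mulmx cpmx_block -/M' mulmx_block.
rewrite !mulmx0 !addr0 !mul_scalar_mx !mul_mx_scalar scalerN subrr.
rewrite det_lblock !scale_scalar_mx det_scalar -expr2 -/(char_poly _) cpmx_X2; congr (_ * \det _).
by rewrite mulNmx addrC map_mxM map_trmx.
Qed.

Lemma block_id2 p q (M : 'M[algC]_(p, q)) :
  char_poly (block_mx 0 M M^T 0) * 'X^(p + q) =
  (char_poly (M *m M^T) \Po 'X^2) * ('X^2) ^+ q.
Proof.
set M' := map_mx polyC M.
have H : \det (block_mx ('X%:M : 'M_p) 0 (M'^T) ('X%:M : 'M_q)) = 'X^(p + q).
  by rewrite det_lblock !det_scalar exprD.
rewrite -H /char_poly -det_mulmx cpmx_block -/M' mulmx_block.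
rewrite !mulmx0 !add0r !mul_scalar_mx !mul_mx_scalar !scalerN addNr.
rewrite det_ublock !scale_scalar_mx det_scalar -expr2 -/(char_poly _) cpmx_X2; congr (\det _ * _).
by rewrite mulNmx map_mxM map_trmx.
Qed.

Lemma two_matchings (V : finType) (e : rel V) (Hsym : symmetric e)
  (Hac : forall c : seq V, uniq c -> (2 < size c)%N -> ~~ path.cycle e c)
  m (u v : 'I_m -> V) (Hu : injective u) (Hv : injective v)
  (Huv : forall i j, u i != v j) (t1 t2 : 'S_m)
  (G1 : forall i, e (u i) (v (t1 i))) (G2 : forall i, e (u i) (v (t2 i))) :
  t1 = t2.
Proof.
apply/permP => i0; apply/eqP; apply/negPn/negP => Hne.
pose rho := (t1 * t2^-1)%g.
have Hrho : forall y, t2 (rho y) = t1 y by move=> y; rewrite permM permKV.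
have rhoi : rho i0 != i0.
  by apply: contra Hne => /eqP H; rewrite -Hrho H.
pose x a := iter a rho i0.
pose k := fingraph.order rho i0.
have xk : x k = i0 by rewrite /x /k iter_order //; exact: perm_inj.
have k2 : (1 < k)%N.
  have := fingraph.order_gt0 rho i0; rewrite -/k leq_eqVlt => /orP[/eqP k1|//].
  by move: xk; rewrite -k1 /x /= => /eqP; rewrite (negbTE rhoi).
have xinj : forall a b, (a < k)%N -> (b < k)%N -> x a = x b -> a = b.
  move=> a b ak bk xab.
  have U := orbit_uniq rho i0; rewrite /orbit -/k in U.
  apply/eqP; rewrite -(nth_uniq i0 _ _ U) ?size_traject //.
  by rewrite !nth_traject // -/(x a) -/(x b) xab.
pose f j := if odd j then v (t1 (x j./2)) else u (x j./2).
have step : forall j, e (f j) (f j.+1).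
  move=> j; rewrite /f /= uphalf_half; case: (odd j) => /=.
    by rewrite add0n Hsym -(Hrho (x j./2)) G2.
  by rewrite add0n G1.
pose c := map f (iota 0 k.*2).
have szc : size c = k.*2 by rewrite size_map size_iota.
have nthc : forall j, (j < k.*2)%N -> nth (f 0) c j = f j.
  by move=> j jk; rewrite (nth_map 0) ?size_iota // nth_iota.
apply: (negP (Hac c _ _)).
- rewrite /c map_inj_in_uniq ?iota_uniq // => a b; rewrite !mem_iota !add0n => ak bk.
  have ak' : (a./2 < k)%N by rewrite -ltn_double (leq_ltn_trans _ ak) // -{2}(odd_double_half a) leq_addl.
  have bk' : (b./2 < k)%N by rewrite -ltn_double (leq_ltn_trans _ bk) // -{2}(odd_double_half b) leq_addl.
  rewrite /f; case Ha: (odd a); case Hb: (odd b) => H.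
  + move/Hv/perm_inj/(xinj _ _ ak' bk'): H => H.
    by rewrite -(odd_double_half a) -(odd_double_half b) Ha Hb H.
  + by move: (Huv (x b./2) (t1 (x a./2))); rewrite H eqxx.
  + by move: (Huv (x a./2) (t1 (x b./2))); rewrite H eqxx.
  + move/Hu/(xinj _ _ ak' bk'): H => H.
    by rewrite -(odd_double_half a) -(odd_double_half b) Ha Hb H.
- by rewrite szc -addnn (leq_add k2 (ltnW k2)).
- rewrite (cycle_path (f 0)); apply/(pathP (f 0)) => j; rewrite szc => jk.
  case: j jk => [|j] jk /=.
    have K0 : (0 < k.*2)%N by rewrite double_gt0 ltnW.
    rewrite -nth_last szc !nthc ?ltn_predL //.
    have -> : f 0 = f (k.*2) by rewrite /f odd_double doubleK xk.
    by rewrite -{2}(prednK K0) step.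
  by rewrite !nthc // ?step // ltnW.
Qed.

Lemma det_forest (V : finType) (e : rel V) (Hsym : symmetric e)
  (Hac : forall c : seq V, uniq c -> (2 < size c)%N -> ~~ path.cycle e c)
  m (u v : 'I_m -> V) (Hu : injective u) (Hv : injective v)
  (Huv : forall i j, u i != v j) (M : 'M[algC]_m)
  (HM : forall i j, M i j = (e (u i) (v j))%:R) :
  \det M != 0 -> \det M ^+ 2 = 1.
Proof.
move=> dM.
have term : forall s : 'S_m,
    \prod_i M i (s i) = ([forall i, e (u i) (v (s i))])%:R.
  move=> s; case: (boolP [forall i, e (u i) (v (s i))]) => H.
    by rewrite big1 // => i _; rewrite HM (forallP H).
  rewrite negb_forall in H; case/existsP: H => i Hi.
  by rewrite (bigD1 i) //= HM (negbTE Hi) mul0r.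
case: (pickP (fun s : 'S_m => [forall i, e (u i) (v (s i))])) => [s0 Hs0|H]; last first.
  move: dM; rewrite /determinant big1 ?eqxx // => s _.
  have := term s; rewrite H => /= ->; by rewrite mulr0.
have -> : \det M = (-1) ^+ s0.
  rewrite /determinant (bigD1 s0) //= [X in _ + X]big1 ?addr0 => [|s Hs].
    have := term s0; rewrite Hs0 => /= ->; by rewrite mulr1.
  have := term s => /= ->; case: (boolP [forall i, e (u i) (v (s i))]) => Hg; last by rewrite mulr0.
  have E := @two_matchings _ _ Hsym Hac _ _ _ Hu Hv Huv _ _ (forallP Hs0) (forallP Hg).
  by move: Hs; rewrite E eqxx.
by rewrite sqrr_sign.
Qed.

Theorem corollary4p3 (n : nat) (T : rel 'I_n)
  (Hn : (2 <= n)%N) (HT : is_tree T)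
  (Hirr : irreducible_poly (char_poly (adjmx rat T)))
  (p q : nat) (sigma : 'I_(p + q) -> 'I_n) (Hsigma : bijective sigma)
  (M : 'M[algC]_(p, q))
  (HA : forall i j : 'I_(p + q),
      adjmx algC T (sigma i) (sigma j) = block_mx 0 M M^T 0 i j) :
  disc_graph T = 2 ^+ n * (disc_mx (M^T *m M)) ^+ 2.
Proof.
have en : n = (p + q)%N by rewrite -[n]card_ord -(bij_eq_card Hsigma) card_ord.
subst n.
case: HT => [[Hsym Hirrefl] _ Hac].
have sinj := bij_inj Hsigma.
pose s : 'S_(p + q) := perm sinj.
have HAB : char_poly (adjmx algC T) = char_poly (block_mx 0 M M^T 0).
  rewrite -(@char_poly_perm _ _ s); congr char_poly.
  by apply/matrixP => i j; rewrite mxE !permE HA.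
have c0 : (char_poly (block_mx 0 M M^T 0))`_0 != 0.
  rewrite -HAB.
  have -> : adjmx algC T = map_mx ratr (adjmx rat T).
    by apply/matrixP => i j; rewrite !mxE rmorph_nat.
  rewrite -map_char_poly coef_map fmorph_eq0.
  apply/negP => /eqP H0.
  have Hr : root (char_poly (adjmx rat T)) 0 by rewrite rootE horner_coef0 H0.
  rewrite root_factor_theorem in Hr.
  have Hs : size (('X : {poly rat}) - 0%:P) != 1%N by rewrite size_XsubC.
  have := eqp_size (Hirr.2 _ Hs Hr); rewrite size_XsubC size_char_poly => /eqP.
  by rewrite eqSS => /eqP E; move: Hn; rewrite -E.
set cB := char_poly (block_mx 0 M M^T 0) in c0.
have Xn0 : forall k, ('X^k : {poly algC}) != 0 by move=> k; rewrite monic_neq0 ?monicXn.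
have epq : p = q.
  case: (ltngtP p q) => // hpq; exfalso; move/negP: c0; apply.
  - have H := @block_id2 p q M; rewrite -/cB -exprM in H.
    have e2 : (('X : {poly algC}) ^+ (2 * q)) = 'X^(q - p) * 'X^(p + q).
      by rewrite -exprD; congr (_ ^+ _); lia.
    rewrite e2 mulrA in H; have H' := GRing.mulIf (Xn0 (p + q)%N) H; rewrite H'.
    by rewrite coefMXn subn_gt0 hpq.
  - have H := @block_id1 p q M; rewrite -/cB -exprM in H.
    have e2 : (('X : {poly algC}) ^+ (2 * p)) = 'X^(p + q) * 'X^(p - q).
      by rewrite -exprD; congr (_ ^+ _); lia.
    rewrite e2 -mulrA [RHS]mulrC in H; have H' := GRing.mulIf (Xn0 (p + q)%N) H; rewrite H'.
    by rewrite mulrC coefMXn subn_gt0 hpq.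
subst q.
set g := char_poly (M^T *m M).
have Hc : cB = g \Po 'X^2.
  have H := @block_id1 p p M; rewrite -/cB -/g -exprM mul2n -addnn [RHS]mulrC in H.
  by apply: (GRing.mulIf (Xn0 (p + p)%N)).
have g0 : g`_0 = (-1) ^+ p * (\det M * \det M).
  by rewrite /g char_poly_det det_mulmx det_tr.
have dM0 : \det M != 0.
  move: c0; rewrite Hc -horner_coef0 horner_comp hornerXn expr0n /= horner_coef0 g0.
  by rewrite !mulf_eq0 !negb_or => /andP[_ /andP[]].
have dM2 : \det M ^+ 2 = 1.
  apply: (@det_forest _ T Hsym _ p (fun i => sigma (lshift p i)) (fun j => sigma (rshift p j))) => //.
  - by move=> i j /sinj/lshift_inj.
  - by move=> i j /sinj/rshift_inj.
  - by move=> i j; rewrite (inj_eq sinj) eq_lrshift.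
  - by move=> i j; rewrite -[M i j](block_mxEur 0 M M^T 0) -HA mxE.
rewrite /disc_graph /disc_mx HAB -/cB Hc disc_comp2 ?char_poly_monic // size_char_poly /=.
rewrite -/g g0.
have e4 : (4 : algC) ^+ p = 2 ^+ (p + p)%N by rewrite exprD -exprMn -natrM.
rewrite e4.
transitivity (2 ^+ (p + p) * (((-1) ^+ p) ^+ 2 * \det M ^+ 2) * disc g ^+ 2); first by ring.
by rewrite sqrr_sign dM2 mul1r mulr1.
Qed.
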